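(* Let $\mathcal{T}=(\mathcal{V},\mathcal{E})$ obey the LC-PF model and covariance assumption of the context. Let $r_{\min},x_{\min}$ be the minimum line resistance and reactance in $\mathcal{T}$, and set $k_1=\min(r_{\min}^2,x_{\min}^2)\min_{d}\big(\Omega_p(d,d)+\Omega_q(d,d)+2\Omega_{pq}(d,d)\big)$, the inner minimum being over non-root nodes $d$. Then for every node $a$ and every node $b\neq a$ with $(ab)\notin\mathcal{E}$, the neighbor $c$ of $a$ on the path from $a$ to $b$ (so $(ac)\in\mathcal{E}$) satisfies $\phi_{ab}\ge\phi_{ac}+k_1$.
   Context: $\mathcal{T}=(\mathcal{V},\mathcal{E})$ is a tree with a distinguished root (substation) of degree one. Each edge $(ab)$ has resistance $r_{ab}>0$ and reactance $x_{ab}>0$. Let $H_{1/r},H_{1/x}$ be the weighted Laplacians with edge weights $1/r_{ab}$, $1/x_{ab}$, with the root row and column removed. Non-root nodes have random injections $p_a,q_a$. The LC-PF model gives $v=H_{1/r}^{-1}p+H_{1/x}^{-1}q$ and $\theta=H_{1/x}^{-1}p-H_{1/r}^{-1}q$ at non-root nodes; the root voltage is constant. Covariance assumption: $\Omega_p,\Omega_q$ are the covariances of $p,q$, and $\Omega_{pq}=\mathbb{E}[(p-\mathbb{E}p)(q-\mathbb{E}q)^T]=\Omega_{qp}^T$. For distinct non-root $a,b$, $\Omega_p(a,b)=\Omega_q(a,b)=\Omega_{qp}(a,b)=0$, and $\Omega_{qp}(a,a)\ge0$. Define $\phi_{ab}=\mathbb{E}[((v_a-\mathbb{E}v_a)-(v_b-\mathbb{E}v_b))^2]$.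 *)

(* Defs.v *)
From HB Require Import structures.
From mathcomp Require Import all_boot all_order all_algebra.
From mathcomp Require Import all_classical all_reals all_analysis.
Set Implicit Arguments. Unset Strict Implicit. Unset Printing Implicit Defensive.
Import Order.TTheory GRing.Theory Num.Theory.
Local Open Scope ring_scope.

(* Nodes of the network: 'I_n.+1, the root (substation) is ord0.
   Non-root nodes are indexed by 'I_n through (lift ord0). *)

Definition is_tree (V : finType) (adj : rel V) : Prop :=
  [/\ (forall a b, adj a b = adj b a),
      (forall a, ~~ adj a a),
      (forall a b, connect adj a b) &
      (forall (x : V) (s : seq V), uniq (x :: s) -> (2 <= size s)%N ->
          ~~ cycle adj (x :: s))].

Definition next_on_path (V : finType) (adj : rel V) (a b c : V) : Prop :=
  exists s : seq V, [/\ path adj a (c :: s), last c s = b & uniq (a :: c :: s)].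

Definition laplacian (R : numDomainType) (V : finType) (adj : rel V)
  (w : V -> V -> R) (a b : V) : R :=
  if a == b then \sum_(c | adj a c) w a c
  else if adj a b then - w a b else 0.

Definition red_laplacian (R : numDomainType) (n : nat) (adj : rel 'I_n.+1)
  (w : 'I_n.+1 -> 'I_n.+1 -> R) : 'M[R]_n :=
  \matrix_(i, j) laplacian adj w (lift ord0 i) (lift ord0 j).

Definition H_inv_weight (R : numFieldType) (n : nat) (adj : rel 'I_n.+1)
  (r : 'I_n.+1 -> 'I_n.+1 -> R) : 'M[R]_n :=
  red_laplacian adj (fun a b => (r a b)^-1).

Definition is_min_edge_weight (R : numDomainType) (V : finType) (adj : rel V)
  (r : V -> V -> R) (m : R) : Prop :=
  (exists a b, adj a b /\ r a b = m) /\ (forall a b, adj a b -> m <= r a b).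

Definition is_min_node (R : numDomainType) (n : nat) (f : 'I_n -> R) (m : R) : Prop :=
  (exists d, f d = m) /\ (forall d, m <= f d).

Definition lcpf_voltage (R : realType) (T : Type) (n : nat) (adj : rel 'I_n.+1)
  (r x : 'I_n.+1 -> 'I_n.+1 -> R) (v0 : R) (p q : 'I_n -> T -> R)
  (a : 'I_n.+1) : T -> R :=
  fun w => match unlift ord0 a with
           | Some i => \sum_j ((invmx (H_inv_weight adj r)) i j * p j w
                             + (invmx (H_inv_weight adj x)) i j * q j w)
           | None => v0
           end.

Definition phi d (T : measurableType d) (R : realType) (P : probability T R)
  (V : Type) (v : V -> T -> R) (a b : V) : \bar R :=
  'E_P[fun w => ((v a w - fine 'E_P[v a]) - (v b w - fine 'E_P[v b])) ^+ 2].

Definition omega_sum d (T : measurableType d) (R : realType) (P : probability T R)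
  (n : nat) (p q : 'I_n -> T -> R) (i : 'I_n) : R :=
  fine (covariance P (p i) (p i)) + fine (covariance P (q i) (q i))
  + 2 * fine (covariance P (p i) (q i)).

(* Main.v *)
Require Import Defs.
From HB Require Import structures.
From mathcomp Require Import all_boot all_order all_algebra.
From mathcomp Require Import all_classical all_reals all_analysis.
From mathcomp Require Import ring lra.
Set Implicit Arguments. Unset Strict Implicit. Unset Printing Implicit Defensive.
Import Order.TTheory GRing.Theory Num.Theory.

Section Graph.
Variable V : finType.

Definition edge_is (u w z y : V) := ((z == u) && (y == w)) || ((z == w) && (y == u)).
Definition rem_edge (e : rel V) (u w : V) : rel V :=
  fun z y => e z y && ~~ edge_is u w z y.
Definition side (e : rel V) (u w : V) : pred V := fun z => connect (rem_edge e u w) u z.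

Lemma edge_isC u w z y : edge_is u w z y = edge_is u w y z.
Proof. by rewrite /edge_is orbC; congr (_ || _); apply: andbC. Qed.

Lemma rem_edge_sym (e : rel V) u w : symmetric e -> symmetric (rem_edge e u w).
Proof. by move=> se z y; rewrite /rem_edge se edge_isC. Qed.

Lemma connect_rem_sub (e : rel V) u w : subrel (connect (rem_edge e u w)) (connect e).
Proof.
apply: connect_sub => z y /andP[ezy _]; exact: connect1.
Qed.

Lemma first_hit (e : rel V) p q x t : connect e x t ->
  [\/ connect (rem_edge e p q) x t, connect (rem_edge e p q) x p |
      connect (rem_edge e p q) x q].
Proof.
move=> /connectP[s pth ->]; elim: s x pth => [|y s IH] x /=.
  by move=> _; constructor 1; exact: connect0.
move=> /andP[exy /IH] H.
case E: (edge_is p q x y).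
  by move: E; rewrite /edge_is => /orP[] /andP[/eqP -> _];
    [constructor 2 | constructor 3]; exact: connect0.
have rxy : rem_edge e p q x y by rewrite /rem_edge exy E.
by case: H => H; [constructor 1 | constructor 2 | constructor 3];
  apply: connect_trans (connect1 rxy) H.
Qed.

Variable adj : rel V.
Hypothesis adj_sym : symmetric adj.
Hypothesis adj_irr : forall a, ~~ adj a a.
Hypothesis acyc : forall (x : V) (s : seq V), uniq (x :: s) -> (2 <= size s)%N ->
          ~~ cycle adj (x :: s).

Lemma side_refl u w : u \in side adj u w.
Proof. exact: connect0. Qed.

Lemma adj_neq u w : adj u w -> u != w.
Proof. by apply: contraTneq => ->; exact: adj_irr. Qed.

Lemma side_edge u w : adj u w -> w \notin side adj u w.
Proof.
move=> auw; apply/negP => /connectP[s pth wl].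
case: (shortenP pth) wl => s' pth' U _ wl.
have nuw := adj_neq auw.
have sz : (2 <= size s')%N.
  case: s' pth' U wl => [|y [|y' s'']] //=.
  - by move=> _ _ E; move: nuw; rewrite E eqxx.
  - move=> /andP[/andP[_ E] _] _ E'; move: E; rewrite -E' /edge_is !eqxx /=.
    done.
move: (acyc U sz); rewrite /cycle rcons_path -wl adj_sym auw andbT.
by rewrite (sub_path _ pth') // => a b /andP[].
Qed.

Lemma side_step u0 u1 u2 : adj u0 u1 -> adj u1 u2 -> u0 != u2 ->
  {subset side adj u0 u1 <= side adj u1 u2}.
Proof.
move=> a01 a12 n02 z; rewrite !unfold_in /side => Hz; move: (Hz).
rewrite (sym_connect_sym (rem_edge_sym u0 u1 adj_sym)) => /(first_hit u1 u2) [].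
- move=> H.
  have H1 : connect (rem_edge adj u1 u2) z u0.
    apply: connect_sub H => a b /andP[/andP[ab _] nab].
    by apply: connect1; rewrite /rem_edge ab.
  rewrite (sym_connect_sym (rem_edge_sym u1 u2 adj_sym)); apply: connect_trans H1 (connect1 _).
  by rewrite /rem_edge a01 /edge_is (negbTE (adj_neq a01)) (negbTE n02).
- move=> H; rewrite (sym_connect_sym (rem_edge_sym u1 u2 adj_sym)).
  apply: connect_sub H => a b /andP[/andP[ab _] nab].
  by apply: connect1; rewrite /rem_edge ab.
- move=> H; exfalso.
  have H1 : connect (rem_edge adj u0 u1) z u2.
    apply: connect_sub H => a b /andP[ab _]; exact: connect1.
  have H2 : connect (rem_edge adj u0 u1) z u1.
    apply: connect_trans H1 (connect1 _).
    by rewrite /rem_edge adj_sym a12 /edge_is (eq_sym u2) (negbTE n02) (eq_sym u1 u0) (negbTE (adj_neq a01)) !andbF.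
  by move: (side_edge a01); rewrite unfold_in /side (connect_trans Hz H2).
Qed.

Lemma path_mono x y s z : path adj x (y :: s) -> uniq (x :: y :: s) ->
  side adj x y z -> all (fun e => side adj e.1 e.2 z) (zip (x :: y :: s) (y :: s)).
Proof.
elim: s x y => [|y2 s IH] x y /=; first by move=> _ _ ->.
move=> /andP[axy /andP[ayy2 pth]] U Sz; rewrite Sz /=.
have nxy2 : x != y2.
  by move: U; rewrite /= !inE negb_or => /andP[/andP[_ /negbTE]]; case: eqP.
have p2 : path adj y (y2 :: s) by rewrite /= ayy2.
have U2 : uniq (y :: y2 :: s) by case/andP: U.
apply: (IH y y2 p2 U2).
by have := side_step axy ayy2 nxy2; move=> /(_ z); rewrite !unfold_in; apply.
Qed.

Lemma path_zip_adj x s : path adj x s -> all (fun e => adj e.1 e.2) (zip (x :: s) s).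
Proof. by elim: s x => [|y s IH] x //= /andP[-> /IH]. Qed.

Local Open Scope ring_scope.
Lemma telescope (R : zmodType) (F : V -> R) x s :
  F x - F (last x s) = \sum_(e <- zip (x :: s) s) (F e.1 - F e.2).
Proof.
elim: s x => [|y s IH] x /=; first by rewrite big_nil subrr.
by rewrite big_cons -IH /= addrA subrK.
Qed.


Section Flow.
Variable R : realFieldType.
Variable w : V -> V -> R.
Hypothesis w_sym : forall a b, w a b = w b a.
Local Open Scope ring_scope.

Definition div (X : V -> R) z := \sum_(y | adj z y) w z y * (X z - X y).

Lemma anti_double (S : pred V) X :
  \sum_(z | S z) \sum_(y | adj z y && S y) w z y * (X z - X y) = 0.
Proof.
pose M := \sum_(z | S z) \sum_(y | adj z y && S y) w z y * (X z - X y).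
rewrite -/M.
pose h z y := if S z && adj z y && S y then w z y * (X z - X y) else 0.
have hM : M = \sum_z \sum_y h z y.
  rewrite /M big_mkcond /=; apply: eq_bigr => z _.
  rewrite big_mkcond /= /h; case: (S z) => /=.
    by apply: eq_bigr => y _; case: (adj z y && S y).
  by rewrite big1.
have hA z y : h z y = - h y z.
  rewrite /h adj_sym; case: (S z); case: (S y); case: (adj y z) => /=;
   rewrite ?oppr0 //.
  by rewrite w_sym -mulrN opprB.
have : \sum_z \sum_y h z y = - \sum_z \sum_y h z y.
  rewrite {1}exchange_big /= -sumrN; apply: eq_bigr => y _.
  by rewrite -sumrN; apply: eq_bigr => z _; rewrite hA.
rewrite -hM => H; lra.
Qed.

Lemma sum_div_cut (S : pred V) X : \sum_(z | S z) div X z =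
  \sum_(z | S z) \sum_(y | adj z y && ~~ S y) w z y * (X z - X y).
Proof.
have -> : \sum_(z | S z) div X z = \sum_(z | S z) \sum_(y | adj z y && S y) w z y * (X z - X y)
   + \sum_(z | S z) \sum_(y | adj z y && ~~ S y) w z y * (X z - X y).
  rewrite -big_split /=; apply: eq_bigr => z _.
  by rewrite /div (bigID S) /=.
by rewrite anti_double add0r.
Qed.

Lemma sum_div0 X : \sum_z div X z = 0.
Proof.
have := sum_div_cut predT X; rewrite /= => ->.
by apply: big1 => z _; rewrite big_pred0 // => y; rewrite andbF.
Qed.

Lemma edge_flow X u y : adj u y ->
  w u y * (X u - X y) = \sum_(z | side adj u y z) div X z.
Proof.
move=> auy; rewrite sum_div_cut.
have yS : ~~ side adj u y y by have := side_edge auy; rewrite unfold_in.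
have uS : side adj u y u by have := side_refl u y; rewrite unfold_in.
rewrite (bigD1 u) //=.
have -> : \sum_(z | side adj u y z && (z != u))
   \sum_(t | adj z t && ~~ side adj u y t) w z t * (X z - X t) = 0.
  apply: big1 => z /andP[zS nzu]; apply: big_pred0 => t.
  apply/negP => /andP[azt tS]; move: tS; apply/negP; rewrite negbK.
  case E: (edge_is u y z t).
    move: E; rewrite /edge_is => /orP[] /andP[/eqP zu /eqP ty].
      by move: nzu; rewrite zu eqxx.
    by move: zS; rewrite zu (negbTE yS).
  apply: connect_trans zS (connect1 _).
  by rewrite /rem_edge azt E.
rewrite addr0 (bigD1 y) /=; last by rewrite auy.
rewrite big_pred0 ?addr0 // => t; apply/negP => /andP[/andP[aut tS] nty].
move: tS; apply/negP; rewrite negbK.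
case E: (edge_is u y u t).
  move: E; rewrite /edge_is eqxx /= => /orP[/eqP ty|/andP[/eqP uy _]].
    by move: nty; rewrite ty eqxx.
  by move: (adj_irr u); rewrite {2}uy auy.
by apply: connect1; rewrite /rem_edge aut E.
Qed.

Lemma sum_indic (S : pred V) a : \sum_(z | S z) ((z == a)%:R : R) = (S a)%:R.
Proof.
case Sa: (S a).
  rewrite (bigD1 a) //= eqxx big1 ?addr0 // => z /andP[_ /negbTE ->] //.
by rewrite big1 // => z Sz; case: eqP => // za; move: Sz; rewrite za Sa.
Qed.

Definition curg (t o u y : V) : R := (side adj u y t)%:R - (side adj u y o)%:R.

Lemma path_sign x y s t o : path adj x (y :: s) -> uniq (x :: y :: s) ->
  all (fun e => 0 <= curg t o e.1 e.2) (zip (x :: y :: s) (y :: s)) ||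
  all (fun e => curg t o e.1 e.2 <= 0) (zip (x :: y :: s) (y :: s)).
Proof.
elim: s x y => [|y2 s IH] x y pth U.
all: case St: (side adj x y t).
1,3: apply/orP; left; apply/allP => e /(allP (path_mono pth U St)) /= Se;
  by rewrite /curg Se subr_ge0; case: (side adj _ _ o).
all: case So: (side adj x y o).
1,3: apply/orP; right; apply/allP => e /(allP (path_mono pth U So)) /= Se;
  by rewrite /curg Se subr_le0; case: (side adj _ _ t).
all: have c0 : curg t o x y = 0 by rewrite /curg St So subrr.
  by rewrite /= c0 lexx.
move: (pth) (U) => /= /andP[axy pth'] /andP[_ U'].
by rewrite c0 lexx /=; exact: (IH _ _ pth' U').
Qed.
End Flow.

End Graph.

Local Open Scope ring_scope.
Section Mat.
Variable n : nat.
Variable adj : rel 'I_n.+1.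
Hypothesis adj_sym : symmetric adj.
Hypothesis adj_irr : forall a, ~~ adj a a.
Hypothesis acyc : forall (x : 'I_n.+1) (s : seq 'I_n.+1), uniq (x :: s) -> (2 <= size s)%N ->
          ~~ cycle adj (x :: s).
Hypothesis conn : forall a b, connect adj a b.
Variable R : realFieldType.
Variable w : 'I_n.+1 -> 'I_n.+1 -> R.
Hypothesis w_sym : forall a b, w a b = w b a.
Hypothesis w_pos : forall a b, adj a b -> 0 < w a b.

Definition ext (f : 'I_n -> R) (u : 'I_n.+1) : R :=
  match unlift ord0 u with Some i => f i | None => 0 end.

Lemma ext_lift f i : ext f (lift ord0 i) = f i.
Proof. by rewrite /ext liftK. Qed.

Lemma ext0 f : ext f ord0 = 0.
Proof. by rewrite /ext unlift_none. Qed.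

Lemma lap_div (f : 'I_n -> R) i :
  \sum_k red_laplacian adj w i k * f k = div adj w (ext f) (lift ord0 i).
Proof.
set u := lift ord0 i.
rewrite /div.
have -> : \sum_(y | adj u y) w u y * (ext f u - ext f y) =
   (\sum_(y | adj u y) w u y) * f i - \sum_(y | adj u y) w u y * ext f y.
  rewrite mulr_suml -sumrB; apply: eq_bigr => y _.
  by rewrite ext_lift mulrBr.
rewrite [X in _ - X]big_mkcond big_ord_recl /= ext0 mulr0 if_same add0r.
have -> : \sum_k red_laplacian adj w i k * f k =
  \sum_k ((if i == k then (\sum_(y | adj u y) w u y) * f k else 0)
          - (if adj u (lift ord0 k) then w u (lift ord0 k) * ext f (lift ord0 k) else 0)).
  apply: eq_bigr => k _; rewrite mxE /laplacian (inj_eq (@lift_inj _ ord0)) ext_lift.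
  case: (eqVneq i k) => [<-|nik].
    by rewrite (negbTE (adj_irr _)) subr0.
  by case: ifP => _; rewrite ?mulNr ?mul0r sub0r ?oppr0.
rewrite sumrB (bigD1 i) //= eqxx.
set S := \sum_(y | adj u y) w u y.
have -> : \sum_(k < n | k != i) (if i == k then S * f k else 0) = 0.
  by apply: big1 => k /negbTE; rewrite eq_sym => ->.
by rewrite addr0.
Qed.

Lemma lap_sym i k : red_laplacian adj w i k = red_laplacian adj w k i.
Proof.
rewrite !mxE /laplacian eq_sym; case: eqP => [->//|_].
by rewrite adj_sym w_sym.
Qed.

Lemma div_root X : (forall i, div adj w X (lift ord0 i) = 0) ->
  div adj w X ord0 = 0.
Proof.
move=> H; have := sum_div0 adj_sym w_sym X; rewrite big_ord_recl big1 ?addr0 //.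
Qed.

Lemma const_conn (X : 'I_n.+1 -> R) : (forall u y, adj u y -> X u = X y) ->
  forall a b, X a = X b.
Proof.
move=> H a b; have /connectP[s pth ->] := conn a b.
elim: s a pth => [|y s IH] a //= /andP[ay /IH <-]; exact: H.
Qed.

Lemma lap_unit : red_laplacian adj w \in unitmx.
Proof.
rewrite -row_free_unit -kermx_eq0; apply/eqP/row_matrixP => j; rewrite row0.
set v := row j _.
have vH : v *m red_laplacian adj w = 0 by apply/sub_kermxP; exact: row_sub.
pose f i := v 0 i.
have divl k : div adj w (ext f) (lift ord0 k) = 0.
  rewrite -lap_div; have h := congr1 (fun M : 'M[R]_(1, n) => M 0 k) vH; rewrite !mxE in h; rewrite -[in RHS]h.
  by apply: eq_bigr => i _; rewrite lap_sym mulrC.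
have divz z : div adj w (ext f) z = 0.
  case: (unliftP ord0 z) => [k ->|->]; first exact: divl.
  exact: div_root.
have E u y : adj u y -> ext f u = ext f y.
  move=> auy; have := edge_flow adj_sym adj_irr acyc w_sym (ext f) auy.
  rewrite big1 // => /eqP; rewrite mulf_eq0 subr_eq0 => /orP[/eqP w0|/eqP //].
  by move: (w_pos auy); rewrite w0 ltxx.
apply/rowP => i; have := const_conn E (lift ord0 i) ord0.
by rewrite ext_lift ext0 /f => ->; rewrite mxE.
Qed.

Definition colG (d : 'I_n) : 'I_n.+1 -> R :=
  ext (fun k => invmx (red_laplacian adj w) k d).

Lemma div_col d z : div adj w (colG d) z = (z == lift ord0 d)%:R - (z == ord0)%:R.
Proof.
have divl k : div adj w (colG d) (lift ord0 k) = (k == d)%:R.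
  rewrite -lap_div.
  have h := congr1 (fun M : 'M[R]_n => M k d) (mulmxV lap_unit).
  rewrite !mxE in h; rewrite -h.
  done.
case: (unliftP ord0 z) => [k ->|->].
  by rewrite divl (inj_eq (@lift_inj _ ord0)) (eq_sym (lift ord0 k)) (negbTE (neq_lift _ _)) subr0.
have := sum_div0 adj_sym w_sym (colG d); rewrite big_ord_recl.
under eq_bigr do rewrite divl.
rewrite (bigD1 d) //= eqxx big1 ?addr0; last by move=> k /negbTE ->.
have h1 : (true%:R : R) = 1 by []. by move=> H; lra.
Qed.

Definition cur (d : 'I_n) (u y : 'I_n.+1) : R := @curg _ adj R (lift ord0 d) ord0 u y.

Lemma col_edge d u y : adj u y -> w u y * (colG d u - colG d y) = cur d u y.
Proof.
move=> auy; rewrite (edge_flow adj_sym adj_irr acyc w_sym _ auy).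
under eq_bigr do rewrite div_col.
by rewrite sumrB !sum_indic.
Qed.

Lemma colG_edge d u y : adj u y -> colG d u - colG d y = cur d u y / w u y.
Proof.
move=> auy; rewrite -(col_edge d auy) [w u y * _]mulrC mulfK //.
by apply/negP => /eqP w0; move: (w_pos auy); rewrite w0 ltxx.
Qed.

Lemma colG_path_ge0 d x s : path adj x s ->
  all (fun e => 0 <= cur d e.1 e.2) (zip (x :: s) s) ->
  0 <= colG d x - colG d (last x s).
Proof.
move=> pth hc; rewrite telescope big_seq; apply: sumr_ge0 => e ez.
rewrite colG_edge; last exact: (allP (path_zip_adj pth)).
apply: divr_ge0; first exact: (allP hc).
by apply: ltW; apply: w_pos; exact: (allP (path_zip_adj pth)).
Qed.

Lemma colG_path_le0 d x s : path adj x s ->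
  all (fun e => cur d e.1 e.2 <= 0) (zip (x :: s) s) ->
  colG d x - colG d (last x s) <= 0.
Proof.
move=> pth hc; rewrite telescope big_seq; apply: sumr_le0 => e ez.
rewrite colG_edge; last exact: (allP (path_zip_adj pth)).
apply: mulr_le0_ge0; first exact: (allP hc).
by rewrite invr_ge0; apply: ltW; apply: w_pos; exact: (allP (path_zip_adj pth)).
Qed.

Lemma colG_path_head_ge d x y s : path adj x (y :: s) ->
  all (fun e => 0 <= cur d e.1 e.2) (zip (x :: y :: s) (y :: s)) ->
  cur d x y / w x y <= colG d x - colG d (last y s).
Proof.
move=> /= /andP[axy pth] /= /andP[_ hc].
have -> : colG d x - colG d (last y s) = (colG d x - colG d y) + (colG d y - colG d (last y s)).
  by rewrite addrA subrK.
by rewrite colG_edge // lerDl; apply: colG_path_ge0.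
Qed.

Lemma colG_path_head_le d x y s : path adj x (y :: s) ->
  all (fun e => cur d e.1 e.2 <= 0) (zip (x :: y :: s) (y :: s)) ->
  colG d x - colG d (last y s) <= cur d x y / w x y.
Proof.
move=> /= /andP[axy pth] /= /andP[_ hc].
have -> : colG d x - colG d (last y s) = (colG d x - colG d y) + (colG d y - colG d (last y s)).
  by rewrite addrA subrK.
by rewrite colG_edge // gerDl; apply: colG_path_le0.
Qed.

Lemma colG_split_ge0 d x y s : path adj x (y :: s) ->
  all (fun e => 0 <= cur d e.1 e.2) (zip (x :: y :: s) (y :: s)) ->
  0 <= colG d x - colG d y /\ 0 <= colG d y - colG d (last y s).
Proof.
move=> /= /andP[axy pth] /= /andP[h1 hc]; split; last exact: colG_path_ge0.
by rewrite colG_edge // divr_ge0 // ltW // w_pos.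
Qed.

Lemma colG_split_le0 d x y s : path adj x (y :: s) ->
  all (fun e => cur d e.1 e.2 <= 0) (zip (x :: y :: s) (y :: s)) ->
  colG d x - colG d y <= 0 /\ colG d y - colG d (last y s) <= 0.
Proof.
move=> /= /andP[axy pth] /= /andP[h1 hc]; split; last exact: colG_path_le0.
by rewrite colG_edge // mulr_le0_ge0 // invr_ge0 ltW // w_pos.
Qed.

End Mat.

Section S.
Context d (T : measurableType d) (R : realType) (P : probability T R).
Notation L2 := (Lfun P 2%:E).
Lemma one_le2 : (1 <= (2%:E : \bar R))%E.
Proof. by rewrite lee1n. Qed.
Lemma L2D (f g : T -> R) : f \in L2 -> g \in L2 -> (f \+ g)%R \in L2.
Proof.
move=> hf hg; have [_ H] := @Lfun_submod_closed _ T R P 2%:E one_le2.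
by have := H 1 f g hf hg; rewrite scale1r.
Qed.
Lemma L2Z a (f : T -> R) : f \in L2 -> (a \o* f)%R \in L2.
Proof. by move=> hf; apply: Lfun_scale => //; rewrite ler1n. Qed.
Lemma L2cst c : cst c \in L2.
Proof. exact: Lfun_cst. Qed.
Lemma Pfin : P setT \is a fin_num.
Proof. exact: fin_num_measure. Qed.
Lemma L21 (f : T -> R) : f \in L2 -> f \in Lfun P 1.
Proof. by apply: Lfun_subset12; exact: fin_num_measure. Qed.

Lemma L2sum (I : Type) (s : seq I) (g : I -> T -> R) : (forall j, g j \in L2) ->
  (fun w => \sum_(j <- s) g j w) \in L2.
Proof.
move=> hg; elim: s => [|j s IH].
  have -> : (fun w : T => \sum_(j <- [::]) g j w) = cst 0.
    by apply/funext => w; rewrite big_nil.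
  exact: L2cst.
have -> : (fun w : T => \sum_(k <- j :: s) g k w) = (g j \+ (fun w => \sum_(k <- s) g k w))%R.
  by apply/funext => w; rewrite big_cons.
exact: L2D.
Qed.

Definition covr (X Y : T -> R) : R := fine (covariance P X Y).
Definition Er (X : T -> R) : R := fine ('E_P[X]).

Lemma covrE X Y : X \in L2 -> Y \in L2 -> covariance P X Y = (covr X Y)%:E.
Proof.
move=> hX hY; rewrite /covr fineK //.
by apply: covariance_fin_num; [exact: L21 | exact: L21 | exact: Lfun2_mul_Lfun1].
Qed.

Lemma covrC X Y : covr X Y = covr Y X.
Proof. by rewrite /covr covarianceC. Qed.

Lemma covrDl X Y Z : X \in L2 -> Y \in L2 -> Z \in L2 ->
  covr (X \+ Y)%R Z = covr X Z + covr Y Z.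
Proof.
move=> hX hY hZ; apply: EFin_inj.
by rewrite EFinD -!covrE ?L2D // covarianceDl.
Qed.

Lemma covrDr X Y Z : X \in L2 -> Y \in L2 -> Z \in L2 ->
  covr X (Y \+ Z)%R = covr X Y + covr X Z.
Proof. by move=> hX hY hZ; rewrite covrC covrDl // !(covrC X). Qed.

Lemma covrZl a X Y : X \in L2 -> Y \in L2 -> covr (a \o* X)%R Y = a * covr X Y.
Proof.
move=> hX hY; apply: EFin_inj.
rewrite EFinM -!covrE ?L2Z // covarianceZl //; try exact: L21.
exact: Lfun2_mul_Lfun1.
Qed.

Lemma covrZr a X Y : X \in L2 -> Y \in L2 -> covr X (a \o* Y)%R = a * covr X Y.
Proof. by move=> hX hY; rewrite covrC covrZl // covrC. Qed.

Lemma covr_cst_l c X : covr (cst c) X = 0.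
Proof. by rewrite /covr covariance_cst_l. Qed.

Lemma covr_suml (I : Type) (s : seq I) (g : I -> T -> R) Y :
  (forall j, g j \in L2) -> Y \in L2 ->
  covr (fun w => \sum_(j <- s) g j w) Y = \sum_(j <- s) covr (g j) Y.
Proof.
move=> hg hY; elim: s => [|j s IH].
  have -> : (fun w : T => \sum_(j <- [::]) g j w) = cst 0.
    by apply/funext => w; rewrite big_nil.
  by rewrite covr_cst_l big_nil.
have -> : (fun w : T => \sum_(k <- j :: s) g k w) = (g j \+ (fun w => \sum_(k <- s) g k w))%R.
  by apply/funext => w; rewrite big_cons.
by rewrite covrDl ?L2sum // IH big_cons.
Qed.

Lemma covr_sumr (I : Type) (s : seq I) (g : I -> T -> R) Y :
  (forall j, g j \in L2) -> Y \in L2 ->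
  covr Y (fun w => \sum_(j <- s) g j w) = \sum_(j <- s) covr Y (g j).
Proof.
move=> hg hY; rewrite covrC covr_suml //; apply: eq_bigr => j _; exact: covrC.
Qed.

Lemma ErD X Y : X \in L2 -> Y \in L2 -> Er (X \+ Y)%R = Er X + Er Y.
Proof.
move=> hX hY; rewrite /Er expectationD ?L21 // fineD //; exact/expectation_fin_num/L21.
Qed.

Lemma ErZ a X : X \in L2 -> Er (a \o* X)%R = a * Er X.
Proof. by move=> hX; rewrite /Er expectationZl ?L21 // fineM //; exact/expectation_fin_num/L21. Qed.

Lemma Er_cst c : Er (cst c) = c.
Proof. by rewrite /Er expectation_cst. Qed.

Lemma Er_sum (I : Type) (s : seq I) (g : I -> T -> R) :
  (forall j, g j \in L2) ->
  Er (fun w => \sum_(j <- s) g j w) = \sum_(j <- s) Er (g j).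
Proof.
move=> hg; elim: s => [|j s IH].
  have -> : (fun w : T => \sum_(j <- [::]) g j w) = cst 0.
    by apply/funext => w; rewrite big_nil.
  by rewrite Er_cst big_nil.
have -> : (fun w : T => \sum_(k <- j :: s) g k w) = (g j \+ (fun w => \sum_(k <- s) g k w))%R.
  by apply/funext => w; rewrite big_cons.
by rewrite ErD ?L2sum // IH big_cons.
Qed.


Section Lin.
Variable n : nat.
Variables p q : 'I_n -> T -> R.
Hypothesis hp : forall i, p i \in L2.
Hypothesis hq : forall i, q i \in L2.
Hypothesis hpp : forall i j, i != j -> covr (p i) (p j) = 0.
Hypothesis hqq : forall i j, i != j -> covr (q i) (q j) = 0.
Hypothesis hqp : forall i j, i != j -> covr (q i) (p j) = 0.
Local Hint Resolve hp hq L2Z L2D L2cst : core.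

Definition gf (a b : 'I_n -> R) j : T -> R := ((a j \o* p j) \+ (b j \o* q j))%R.

Lemma gf_L2 a b j : gf a b j \in L2.
Proof. by apply: L2D; apply: L2Z. Qed.
Local Hint Resolve gf_L2 L2sum : core.

Lemma covr_gf_off a b a' b' j k : j != k -> covr (gf a b j) (gf a' b' k) = 0.
Proof.
move=> njk; have nkj : k != j by rewrite eq_sym.
rewrite /gf covrDl ?L2Z ?L2D //. rewrite !covrDr ?L2Z //.
rewrite !covrZl ?L2Z // !covrZr // hpp // hqq // hqp // (covrC (p j)) hqp //.
rewrite !mulr0 !addr0 //. all: by auto.
Qed.

Definition Tm (a b : 'I_n -> R) j : R :=
  a j ^+ 2 * covr (p j) (p j) + b j ^+ 2 * covr (q j) (q j)
  + 2 * a j * b j * covr (p j) (q j).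

Lemma covr_gf_diag a b j : covr (gf a b j) (gf a b j) = Tm a b j.
Proof.
rewrite /gf covrDl; try by auto.
rewrite !covrDr; try by auto.
rewrite !covrZl; try by auto.
rewrite !covrZr; try by auto.
rewrite (covrC (q j) (p j)) /Tm.
ring.
Qed.

Lemma var_sum a b :
  covr (fun w => \sum_j gf a b j w) (fun w => \sum_j gf a b j w) = \sum_j Tm a b j.
Proof.
rewrite covr_suml; try by auto.
apply: eq_bigr => j _; rewrite covr_sumr; try by auto.
rewrite (bigD1 j) //= big1 ?addr0 ?covr_gf_diag // => k njk.
by apply: covr_gf_off; rewrite eq_sym.
Qed.

Lemma Er_gf a b j : Er (gf a b j) = a j * Er (p j) + b j * Er (q j).
Proof. by rewrite /gf ErD ?L2Z // !ErZ. Qed.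

Lemma phi_formula (a1 b1 a2 b2 : 'I_n -> R) (k1 k2 : R) :
  let Y1 := fun w => \sum_j (a1 j * p j w + b1 j * q j w) + k1 in
  let Y2 := fun w => \sum_j (a2 j * p j w + b2 j * q j w) + k2 in
  ('E_P[fun w => (((Y1 w - fine 'E_P[Y1]) - (Y2 w - fine 'E_P[Y2])) ^+ 2)%R] =
  (\sum_j Tm (fun j => a1 j - a2 j) (fun j => b1 j - b2 j) j)%:E)%E.
Proof.
move=> Y1 Y2.
have EY (a b : 'I_n -> R) (k : R) : fine ('E_P[fun w => (\sum_j (a j * p j w + b j * q j w) + k)%R])%E =
    \sum_j (a j * Er (p j) + b j * Er (q j)) + k.
  have -> : (fun w => \sum_j (a j * p j w + b j * q j w) + k) =
            ((fun w => \sum_j gf a b j w) \+ cst k)%R.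
    apply/funext => w; rewrite /gf /=; congr (_ + _).
    by apply: eq_bigr => j _; rewrite mulrC [b j * _]mulrC.
  rewrite -/(Er _) ErD; try by auto.
  rewrite Er_sum; try by auto.
  by rewrite Er_cst; congr (_ + _); apply: eq_bigr => j _; rewrite Er_gf.
set a := fun j => a1 j - a2 j; set b := fun j => b1 j - b2 j.
set Z := fun w => \sum_j gf a b j w.
have hZ : Z \in L2 by apply: L2sum => j; exact: gf_L2.
rewrite -var_sum -/Z -covrE //.
rewrite covariance.unlock /Y1 /Y2 !EY.
have -> : fine ('E_P[Z])%E = Er Z by [].
rewrite /Z Er_sum; try by auto.
congr (expectation P _); apply/funext => w /=.
rewrite [RHS](_ : _ = (\sum_j gf a b j w - \sum_j Er (gf a b j)) *
   (\sum_j gf a b j w - \sum_j Er (gf a b j))) //.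
have -> : \sum_j Er (gf a b j) = \sum_j (a j * Er (p j) + b j * Er (q j)).
  by apply: eq_bigr => j _; exact: Er_gf.
rewrite expr2 /a /b /gf /=.
set S1 := \sum_j (a1 j * p j w + b1 j * q j w).
set S2 := \sum_j (a2 j * p j w + b2 j * q j w).
set E1 := \sum_j (a1 j * Er (p j) + b1 j * Er (q j)).
set E2 := \sum_j (a2 j * Er (p j) + b2 j * Er (q j)).
have -> : \sum_j (p j w * (a1 j - a2 j) + q j w * (b1 j - b2 j)) = S1 - S2.
  by rewrite /S1 /S2 -sumrB; apply: eq_bigr => j _; ring.
have -> : \sum_j ((a1 j - a2 j) * Er (p j) + (b1 j - b2 j) * Er (q j)) = E1 - E2.
  by rewrite /E1 /E2 -sumrB; apply: eq_bigr => j _; ring.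
ring.
Qed.

End Lin.
End S.

Local Open Scope ring_scope.

Lemma tm_mono (R : realFieldType) (A B A' B' Vp Vq C : R) :
  0 <= Vp -> 0 <= Vq -> 0 <= C ->
  (0 <= A /\ 0 <= B /\ 0 <= A' /\ 0 <= B') \/ (A <= 0 /\ B <= 0 /\ A' <= 0 /\ B' <= 0) ->
  (A ^+ 2 * Vp + A' ^+ 2 * Vq + 2 * A * A' * C) +
  (B ^+ 2 * Vp + B' ^+ 2 * Vq + 2 * B * B' * C) <=
  (A + B) ^+ 2 * Vp + (A' + B') ^+ 2 * Vq + 2 * (A + B) * (A' + B') * C.
Proof.
move=> hp hq hc hs.
have [h1 [h2 [h3 h4]]] : 0 <= A * B /\ 0 <= A' * B' /\ 0 <= A * B' /\ 0 <= A' * B.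
  case: hs => [[a1 [a2 [a3 a4]]]|[a1 [a2 [a3 a4]]]].
    by split; [|split; [|split]]; apply: mulr_ge0.
  by split; [|split; [|split]]; apply: mulr_le0.
have e1 := mulr_ge0 h1 hp; have e2 := mulr_ge0 h2 hq.
have e3 := mulr_ge0 h3 hc; have e4 := mulr_ge0 h4 hc.
have -> : (A + B) ^+ 2 * Vp + (A' + B') ^+ 2 * Vq + 2 * (A + B) * (A' + B') * C =
  (A ^+ 2 * Vp + A' ^+ 2 * Vq + 2 * A * A' * C) +
  (B ^+ 2 * Vp + B' ^+ 2 * Vq + 2 * B * B' * C) +
  (2 * (A * B * Vp) + 2 * (A' * B' * Vq) + 2 * (A * B' * C) + 2 * (A' * B * C)).
  by ring.
lra.
Qed.

Lemma tm_bound (R : realFieldType) (B B' Vp Vq C rm xm : R) :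
  0 <= Vp -> 0 <= Vq -> 0 <= C -> 0 < rm -> 0 < xm ->
  (rm <= B /\ xm <= B') \/ (B <= - rm /\ B' <= - xm) ->
  Num.min (rm ^+ 2) (xm ^+ 2) * (Vp + Vq + 2 * C) <=
  B ^+ 2 * Vp + B' ^+ 2 * Vq + 2 * B * B' * C.
Proof.
move=> hp hq hc hr hx hs; have hr' := ltW hr; have hx' := ltW hx.
set m := Num.min (rm ^+ 2) (xm ^+ 2).
have m1 : m <= rm ^+ 2 by rewrite /m ge_min lexx.
have m2 : m <= xm ^+ 2 by rewrite /m ge_min lexx orbT.
have m3 : m <= rm * xm.
  case: (leP rm xm) => h.
    apply: (le_trans m1); rewrite expr2 ler_pM2l //.
  apply: (le_trans m2); rewrite expr2 ler_pM2r //; exact: ltW.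
have [b1 [b2 b3]] : rm ^+ 2 <= B ^+ 2 /\ xm ^+ 2 <= B' ^+ 2 /\ rm * xm <= B * B'.
  case: hs => [[h1 h2]|[h1 h2]].
    split; [|split]; rewrite ?expr2; by apply: ler_pM.
  have h1' : rm <= - B by rewrite lerNr.
  have h2' : xm <= - B' by rewrite lerNr.
  split; [|split].
  - rewrite -(sqrrN B) !expr2; by apply: ler_pM.
  - rewrite -(sqrrN B') !expr2; by apply: ler_pM.
  - rewrite -[B * B']mulrNN; by apply: ler_pM.
have f1 : 0 <= (B ^+ 2 - m) * Vp by apply: mulr_ge0 => //; rewrite subr_ge0; exact: (le_trans m1).
have f2 : 0 <= (B' ^+ 2 - m) * Vq by apply: mulr_ge0 => //; rewrite subr_ge0; exact: (le_trans m2).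
have f3 : 0 <= (B * B' - m) * C by apply: mulr_ge0 => //; rewrite subr_ge0; exact: (le_trans m3).
have -> : B ^+ 2 * Vp + B' ^+ 2 * Vq + 2 * B * B' * C =
  m * (Vp + Vq + 2 * C) + ((B ^+ 2 - m) * Vp + (B' ^+ 2 - m) * Vq + 2 * ((B * B' - m) * C)).
  by ring.
lra.
Qed.

Lemma tm_ge0 (R : realFieldType) (B B' Vp Vq C : R) :
  0 <= Vp -> 0 <= Vq -> 0 <= C -> 0 <= B * B' ->
  0 <= B ^+ 2 * Vp + B' ^+ 2 * Vq + 2 * B * B' * C.
Proof.
move=> hp hq hc hb.
have e1 : 0 <= B ^+ 2 * Vp by rewrite mulr_ge0 // sqr_ge0.
have e2 : 0 <= B' ^+ 2 * Vq by rewrite mulr_ge0 // sqr_ge0.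
have e3 : 0 <= (B * B') * C by rewrite mulr_ge0.
have -> : 2 * B * B' * C = 2 * ((B * B') * C) by ring.
lra.
Qed.

Unset Implicit Arguments.
Set Strict Implicit.
Theorem theorem8 (d : measure_display) (T : measurableType d) (R : realType)
  (P : probability T R) (n : nat) (adj : rel 'I_n.+1)
  (r x : 'I_n.+1 -> 'I_n.+1 -> R) (v0 : R)
  (p q : 'I_n -> {RV P >-> R}) (rmin xmin omin : R) :
  is_tree adj ->
  #|[set b | adj ord0 b]| = 1%N ->
  (forall a b, adj a b -> 0 < r a b /\ 0 < x a b) ->
  (forall a b, r a b = r b a /\ x a b = x b a) ->
  (forall i, (p i : T -> R) \in Lfun P 2%:E) ->
  (forall i, (q i : T -> R) \in Lfun P 2%:E) ->
  (forall i j, i != j ->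
     [/\ covariance P (p i) (p j) = 0%E,
         covariance P (q i) (q j) = 0%E &
         covariance P (q i) (p j) = 0%E]) ->
  (forall i, (0 <= covariance P (q i) (p i))%E) ->
  is_min_edge_weight adj r rmin ->
  is_min_edge_weight adj x xmin ->
  is_min_node (omega_sum P (fun i => (p i : T -> R)) (fun i => (q i : T -> R))) omin ->
  let k1 := Num.min (rmin ^+ 2) (xmin ^+ 2) * omin in
  let v := lcpf_voltage adj r x v0 (fun i => (p i : T -> R)) (fun i => (q i : T -> R)) in
  forall a b c : 'I_n.+1, b != a -> ~~ adj a b -> next_on_path adj a b c ->
    (phi P v a c + k1%:E <= phi P v a b)%E.
Proof.
move=> [adj_sym adj_irr conn acyc] _ hpos hsym hp hq hcov hqp0
  [[ra [rb [arab rab]]] rmin_le] [[xa [xb [axab xab]]] xmin_le] [_ omin_le]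
  k1 v a b c nba nab [s [pth lst U]].
pose pP := fun i => (p i : T -> R).
pose qP := fun i => (q i : T -> R).
have hpp : forall i j, i != j -> covr P (pP i) (pP j) = 0.
  by move=> i j nij; rewrite /covr; case: (hcov i j nij) => -> _ _.
have hqq : forall i j, i != j -> covr P (qP i) (qP j) = 0.
  by move=> i j nij; rewrite /covr; case: (hcov i j nij) => _ -> _.
have hqp : forall i j, i != j -> covr P (qP i) (pP j) = 0.
  by move=> i j nij; rewrite /covr; case: (hcov i j nij) => _ _ ->.
pose wr := fun u y => (r u y)^-1.
pose wx := fun u y => (x u y)^-1.
have wr_sym : forall u y, wr u y = wr y u by move=> u y; rewrite /wr (hsym u y).1.
have wx_sym : forall u y, wx u y = wx y u by move=> u y; rewrite /wx (hsym u y).2.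
have wr_pos : forall u y, adj u y -> 0 < wr u y.
  by move=> u y auy; rewrite /wr invr_gt0; case: (hpos u y auy).
have wx_pos : forall u y, adj u y -> 0 < wx u y.
  by move=> u y auy; rewrite /wx invr_gt0; case: (hpos u y auy).
pose Gr := colG adj wr.
pose Gx := colG adj wx.
have hv : forall u, v u = fun w => \sum_j (Gr j u * pP j w + Gx j u * qP j w)
    + (if unlift ord0 u is Some _ then 0 else v0).
  move=> u; apply/funext => w0; rewrite /v /lcpf_voltage /Gr /Gx /colG /ext.
  case: (unlift ord0 u) => [i|] /=; first by rewrite addr0.
  by rewrite big1 ?add0r // => j _; rewrite !mul0r addr0.
have hphi : forall u y, phi P v u y = (\sum_j Tm P pP qP (fun j => Gr j u - Gr j y)
     (fun j => Gx j u - Gx j y) j)%:E.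
  move=> u y; rewrite /phi !hv.
  exact: (phi_formula hp hq hpp hqq hqp (fun j => Gr j u) (fun j => Gx j u)
     (fun j => Gr j y) (fun j => Gx j y)).
rewrite !hphi -EFinD lee_fin.
have hVp : forall j, 0 <= covr P (pP j) (pP j).
  by move=> j; apply: fine_ge0; exact: (variance_ge0 P (pP j)).
have hVq : forall j, 0 <= covr P (qP j) (qP j).
  by move=> j; apply: fine_ge0; exact: (variance_ge0 P (qP j)).
have hC : forall j, 0 <= covr P (pP j) (qP j).
  by move=> j; rewrite /covr covarianceC; apply: fine_ge0; exact: hqp0.
have hsign : forall j,
  (0 <= Gr j a - Gr j c /\ 0 <= Gr j c - Gr j b /\ 0 <= Gx j a - Gx j c /\ 0 <= Gx j c - Gx j b) \/
  (Gr j a - Gr j c <= 0 /\ Gr j c - Gr j b <= 0 /\ Gx j a - Gx j c <= 0 /\ Gx j c - Gx j b <= 0).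
  move=> j; case/orP: (path_sign adj_sym adj_irr acyc R (lift ord0 j) ord0 pth U) => H.
    have [h1 h2] := colG_split_ge0 adj_sym adj_irr acyc conn wr_sym wr_pos pth H.
    have [h3 h4] := colG_split_ge0 adj_sym adj_irr acyc conn wx_sym wx_pos pth H.
    by left; rewrite -lst.
  have [h1 h2] := colG_split_le0 adj_sym adj_irr acyc conn wr_sym wr_pos pth H.
  have [h3 h4] := colG_split_le0 adj_sym adj_irr acyc conn wx_sym wx_pos pth H.
  by right; rewrite -lst.
have Edec : forall (G : 'I_n -> 'I_n.+1 -> R) j, G j a - G j b = (G j a - G j c) + (G j c - G j b).
  by move=> G j; rewrite addrA subrK.
have hmono : forall j, Tm P pP qP (fun j => Gr j a - Gr j c) (fun j => Gx j a - Gx j c) j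
   <= Tm P pP qP (fun j => Gr j a - Gr j b) (fun j => Gx j a - Gx j b) j.
  move=> j; rewrite /Tm (Edec Gr) (Edec Gx).
  have := tm_mono (hVp j) (hVq j) (hC j) (hsign j).
  have : 0 <= (Gr j c - Gr j b) * (Gx j c - Gx j b).
    by case: (hsign j) => [[_ [h1 [_ h2]]]|[_ [h1 [_ h2]]]]; [apply: mulr_ge0|apply: mulr_le0].
  move=> /(tm_ge0 (hVp j) (hVq j) (hC j)).
  move=> h1 h2; lra.
have rmin_pos : 0 < rmin by rewrite -rab; case: (hpos ra rb arab).
have xmin_pos : 0 < xmin by rewrite -xab; case: (hpos xa xb axab).
case: s pth lst U => [|c2 s'] pth lst U.
  by move: pth lst => /= /andP[ac _] lc; move: nab; rewrite -lc ac.
have pthc : path adj c (c2 :: s') by case/andP: pth.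
have lst' : last c2 s' = b by [].
have hc2 : adj c c2 by case/andP: pthc.
have [j0 hj0] : exists j0, cur adj R j0 c c2 = 1 \/ cur adj R j0 c c2 = -1.
  have sE := side_edge adj_sym adj_irr acyc hc2; rewrite unfold_in in sE.
  have sR := side_refl adj c c2; rewrite unfold_in in sR.
  case So: (side adj c c2 ord0).
    have nc2 : ord0 != c2 by apply/eqP => e; move: So; rewrite e /side (negbTE sE).
    have [j0 e _] := unlift_some nc2; exists j0; right.
    by rewrite /cur /curg -e So /side (negbTE sE) sub0r.
  have nc : ord0 != c by apply/eqP => e; move: So; rewrite e /side sR.
  have [j0 e _] := unlift_some nc; exists j0; left.
  by rewrite /cur /curg -e So /side sR subr0.
have hB : (rmin <= Gr j0 c - Gr j0 b /\ xmin <= Gx j0 c - Gx j0 b) \/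
          (Gr j0 c - Gr j0 b <= - rmin /\ Gx j0 c - Gx j0 b <= - xmin).
  case/orP: (path_sign adj_sym adj_irr acyc R (lift ord0 j0) ord0 pth U) => H;
    move: (H) => /= /andP[_ Ht].
    have c1 : cur adj R j0 c c2 = 1.
      case: hj0 => // e; move: Ht => /andP[+ _] /=.
      by rewrite -/(cur adj R j0 c c2) e ler0N1.
    have h1 := colG_path_head_ge adj_sym adj_irr acyc conn wr_sym wr_pos pthc Ht.
    have h2 := colG_path_head_ge adj_sym adj_irr acyc conn wx_sym wx_pos pthc Ht.
    rewrite -/(cur adj R j0 c c2) c1 ?div1r ?mul1r /wr ?invrK lst' in h1.
    rewrite -/(cur adj R j0 c c2) c1 ?div1r ?mul1r /wx ?invrK lst' in h2.
    left; split.
      by apply: le_trans h1; apply: rmin_le.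
    by apply: le_trans h2; apply: xmin_le.
  have c1 : cur adj R j0 c c2 = -1.
    case: hj0 => // e; move: Ht => /andP[+ _] /=.
    by rewrite -/(cur adj R j0 c c2) e ler10.
  have h1 := colG_path_head_le adj_sym adj_irr acyc conn wr_sym wr_pos pthc Ht.
  have h2 := colG_path_head_le adj_sym adj_irr acyc conn wx_sym wx_pos pthc Ht.
  rewrite -/(cur adj R j0 c c2) c1 ?mulN1r /wr ?invrK ?mulN1r lst' in h1.
  rewrite -/(cur adj R j0 c c2) c1 ?mulN1r /wx ?invrK ?mulN1r lst' in h2.
  right; split.
    by apply: (le_trans h1); rewrite lerN2; apply: rmin_le.
  by apply: (le_trans h2); rewrite lerN2; apply: xmin_le.
have k1le : Tm P pP qP (fun j => Gr j a - Gr j c) (fun j => Gx j a - Gx j c) j0 + k1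
   <= Tm P pP qP (fun j => Gr j a - Gr j b) (fun j => Gx j a - Gx j b) j0.
  rewrite /Tm (Edec Gr) (Edec Gx).
  have := tm_mono (hVp j0) (hVq j0) (hC j0) (hsign j0).
  have := tm_bound (hVp j0) (hVq j0) (hC j0) rmin_pos xmin_pos hB.
  have : k1 <= Num.min (rmin ^+ 2) (xmin ^+ 2) *
     (covr P (pP j0) (pP j0) + covr P (qP j0) (qP j0) + 2 * covr P (pP j0) (qP j0)).
    rewrite /k1; apply: ler_wpM2l; first by rewrite le_min !sqr_ge0.
    exact: (omin_le j0).
  move=> h1 h2 h3; lra.
rewrite (bigD1 j0) //= [X in _ <= X](bigD1 j0) //=.
have : \sum_(j | j != j0) Tm P pP qP (fun j => Gr j a - Gr j c) (fun j => Gx j a - Gx j c) j <=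
  \sum_(j | j != j0) Tm P pP qP (fun j => Gr j a - Gr j b) (fun j => Gx j a - Gx j b) j.
  by apply: ler_sum => j _; exact: hmono.
move=> hs; lra.
Qed.
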